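(* Let $R$ be a Noetherian ring and $S$ a common multiplicatively closed subset of $R$. Consider the functor $\tau_S$ on finitely generated $R$-modules, $\tau_S(M)=\{m\in M: rm=0\text{ for some }r\in S\}$. The following are equivalent: (a) $\tau_S$ is representable; (b) $\tau_S$ is finitely generated; (c) $S$ is coprincipal.
   Context: A subset $S\subseteq R$ is common multiplicatively closed if $S\neq\emptyset$ and for all $r,s\in S$ there exists $t\in S$ with $t\in Rr\cap Rs$ (then $\tau_S(M)$ is a submodule). $S$ is coprincipal if $S\ne\emptyset$ and there is $s\in S$ with $s\in\bigcap_{r\in S}Rr$. For an $R$-module $X$, $h_X=\operatorname{Hom}_R(X,-)$; an $R$-linear functor $F$ from finitely generated modules to themselves is representable if $F\cong h_M$ for some finitely generated $M$, and finitely generated if there is a finitely generated $M$ with a surjective natural transformation $h_M\to F$. *)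

(* Defs.v *)
From HB Require Import structures.
From mathcomp Require Import all_boot all_order all_algebra.
Set Implicit Arguments. Unset Strict Implicit. Unset Printing Implicit Defensive.
Import GRing.Theory.
Local Open Scope ring_scope.

Section Defs.
Variable R : nzRingType.

Definition left_ideal (I : R -> Prop) : Prop :=
  [/\ I 0, (forall x y, I x -> I y -> I (x + y)) & (forall a x, I x -> I (a * x))].

Definition noetherian_ring : Prop :=
  forall I : R -> Prop, left_ideal I ->
    exists s : seq R, forall x,
      I x <-> exists c : 'I_(size s) -> R, x = \sum_(i < size s) c i * s`_i.

Definition fin_gen (M : lmodType R) : Prop :=
  exists s : seq M, forall m : M,
    exists c : 'I_(size s) -> R, m = \sum_(i < size s) c i *: s`_i.

Definition common_mult_closed (S : R -> Prop) : Prop :=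
  (exists s, S s) /\
  forall r s, S r -> S s -> exists t, [/\ S t, exists a, t = a * r & exists b, t = b * s].

Definition coprincipal (S : R -> Prop) : Prop :=
  (exists s, S s) /\ exists s, S s /\ forall r, S r -> exists a, s = a * r.

Definition tau (S : R -> Prop) (M : lmodType R) (m : M) : Prop :=
  exists r, S r /\ r *: m = 0.

(** A natural transformation eta : h_M -> tau_S between functors on finitely
    generated R-modules, where h_M = Hom_R(M, -) (R-linear maps).
    Components eta N : Hom_R(M,N) -> tau_S(N) (given as maps into N landing in
    tau_S(N)), additive, and natural: eta N' (g o f) = tau_S(g) (eta N f). *)
Definition nat_trans_hom_tau (S : R -> Prop) (M : lmodType R)
  (eta : forall N : lmodType R, (M -> N) -> N) : Prop :=
  [/\ (forall N : lmodType R, fin_gen N ->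
         forall f : M -> N, linear f -> tau S (eta N f)),
      (forall N : lmodType R, fin_gen N ->
         forall f g : M -> N, linear f -> linear g ->
           eta N (fun x => f x + g x) = eta N f + eta N g) &
      (forall (N N' : lmodType R), fin_gen N -> fin_gen N' ->
         forall (f : M -> N) (g : N -> N'), linear f -> linear g ->
           eta N' (g \o f) = g (eta N f))].

Definition components_surjective (S : R -> Prop) (M : lmodType R)
  (eta : forall N : lmodType R, (M -> N) -> N) : Prop :=
  forall N : lmodType R, fin_gen N ->
    forall n : N, tau S n -> exists f : M -> N, linear f /\ eta N f = n.

Definition components_injective (M : lmodType R)
  (eta : forall N : lmodType R, (M -> N) -> N) : Prop :=
  forall N : lmodType R, fin_gen N ->
    forall f g : M -> N, linear f -> linear g -> eta N f = eta N g ->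
      forall x, f x = g x.

Definition tau_representable (S : R -> Prop) : Prop :=
  exists M : lmodType R, fin_gen M /\
    exists eta : forall N : lmodType R, (M -> N) -> N,
                [/\ nat_trans_hom_tau S eta,
                    components_surjective S eta & components_injective eta].

Definition tau_fin_gen (S : R -> Prop) : Prop :=
  exists M : lmodType R, fin_gen M /\
    exists eta : forall N : lmodType R, (M -> N) -> N,
      nat_trans_hom_tau S eta /\ components_surjective S eta.

End Defs.

(* Main.v *)
Require Import Defs.
From HB Require Import structures.
From mathcomp Require Import all_boot all_order all_algebra.
From Stdlib Require Import ClassicalEpsilon FunctionalExtensionality PropExtensionality.
Set Implicit Arguments. Unset Strict Implicit. Unset Printing Implicit Defensive.
Import GRing.Theory.
Local Open Scope ring_scope.

Section Quot.
Variables (R : nzRingType) (r : R).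

Definition qrel (x y : R) : Prop := exists a, x - y = a * r.

Lemma qrel_refl x : qrel x x.
Proof. by exists 0; rewrite subrr mul0r. Qed.
Lemma qrel_sym x y : qrel x y -> qrel y x.
Proof. by case=> a h; exists (- a); rewrite mulNr -h opprB. Qed.
Lemma qrel_trans x y z : qrel x y -> qrel y z -> qrel x z.
Proof.
case=> a ha [b hb]; exists (a + b).
by rewrite mulrDl -ha -hb addrA subrK.
Qed.
Lemma qrelD x y x' y' : qrel x y -> qrel x' y' -> qrel (x + x') (y + y').
Proof.
case=> a ha [b hb]; exists (a + b).
by rewrite mulrDl -ha -hb opprD addrACA.
Qed.
Lemma qrelN x y : qrel x y -> qrel (- x) (- y).
Proof. by case=> a ha; exists (- a); rewrite mulNr -ha opprB opprK addrC. Qed.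
Lemma qrelM a x y : qrel x y -> qrel (a * x) (a * y).
Proof. by case=> b hb; exists (a * b); rewrite -mulrA -hb mulrBr. Qed.

Definition canon (x : R) : R := epsilon (inhabits 0) (qrel x).

Lemma canon_rel x : qrel x (canon x).
Proof. by apply: (epsilon_spec (inhabits 0) (qrel x)); exists x; apply: qrel_refl. Qed.

Lemma canon_eq x y : qrel x y -> canon x = canon y.
Proof.
move=> h; rewrite /canon; congr (epsilon _ _).
apply: functional_extensionality => z; apply: propositional_extensionality.
split=> hz; [exact: qrel_trans (qrel_sym h) hz | exact: qrel_trans h hz].
Qed.

Lemma canon_eqP x y : canon x = canon y -> qrel x y.
Proof.
move=> e; apply: qrel_trans (canon_rel x) _; rewrite e; exact/qrel_sym/canon_rel.
Qed.

Lemma canon_idem x : canon (canon x) = canon x.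
Proof. by apply/esym/canon_eq/canon_rel. Qed.

Record QT := MkQ { qval : R; qP : canon qval == qval }.

HB.instance Definition _ := [isSub for qval].
HB.instance Definition _ := [Choice of QT by <:].

Definition qpi (x : R) : QT := MkQ (introT eqP (canon_idem x)).

Lemma qvalK q : qpi (qval q) = q.
Proof. by apply: val_inj => /=; apply/eqP/qP. Qed.

Lemma pi_eq x y : qrel x y -> qpi x = qpi y.
Proof. by move=> h; apply: val_inj => /=; apply: canon_eq. Qed.

Lemma pi_eqP x y : qpi x = qpi y -> qrel x y.
Proof. by move=> e; apply: canon_eqP; have := congr1 qval e. Qed.

Lemma rel_qval x : qrel (qval (qpi x)) x.
Proof. exact/qrel_sym/canon_rel. Qed.

Definition qadd (p q : QT) := qpi (qval p + qval q).
Definition qopp (p : QT) := qpi (- qval p).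
Definition qzero := qpi 0.
Definition qscale (a : R) (p : QT) := qpi (a * qval p).

Lemma qaddE x y : qadd (qpi x) (qpi y) = qpi (x + y).
Proof. by apply: pi_eq; apply: qrelD; apply: rel_qval. Qed.
Lemma qoppE x : qopp (qpi x) = qpi (- x).
Proof. by apply: pi_eq; apply: qrelN; apply: rel_qval. Qed.
Lemma qscaleE a x : qscale a (qpi x) = qpi (a * x).
Proof. by apply: pi_eq; apply: qrelM; apply: rel_qval. Qed.

Lemma qind (P : QT -> Prop) : (forall x, P (qpi x)) -> forall q, P q.
Proof. by move=> h q; rewrite -(qvalK q). Qed.

Lemma qaddA : associative qadd.
Proof.
by elim/qind=> x; elim/qind=> y; elim/qind=> z; rewrite !qaddE addrA.
Qed.
Lemma qaddC : commutative qadd.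
Proof. by elim/qind=> x; elim/qind=> y; rewrite !qaddE addrC. Qed.
Lemma qadd0 : left_id qzero qadd.
Proof. by elim/qind=> x; rewrite qaddE add0r. Qed.
Lemma qaddN : left_inverse qzero qopp qadd.
Proof. by elim/qind=> x; rewrite qoppE qaddE addNr. Qed.

HB.instance Definition _ := GRing.isZmodule.Build QT qaddA qaddC qadd0 qaddN.

Lemma qscaleA a b v : qscale a (qscale b v) = qscale (a * b) v.
Proof. by elim/qind: v => x; rewrite !qscaleE mulrA. Qed.
Lemma qscale1 : left_id 1 qscale.
Proof. by elim/qind=> x; rewrite qscaleE mul1r. Qed.
Lemma qscaleDr : right_distributive qscale +%R.
Proof.
move=> a; elim/qind=> x; elim/qind=> y.
have -> : qpi x + qpi y = qpi (x + y) by exact: qaddE.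
rewrite !qscaleE; have -> : qpi (a * x) + qpi (a * y) = qpi (a * x + a * y) by exact: qaddE.
by rewrite mulrDr.
Qed.
Lemma qscaleDl v : {morph qscale^~ v: a b / a + b}.
Proof.
elim/qind: v => x a b.
rewrite !qscaleE; have -> : qpi (a * x) + qpi (b * x) = qpi (a * x + b * x) by exact: qaddE.
by rewrite mulrDl.
Qed.

HB.instance Definition _ := GRing.Zmodule_isLmodule.Build R QT qscaleA qscale1 qscaleDr qscaleDl.

Lemma piD x y : qpi x + qpi y = qpi (x + y) :> QT.
Proof. exact: qaddE. Qed.
Lemma piZ a x : a *: qpi x = qpi (a * x) :> QT.
Proof. exact: qscaleE. Qed.
Lemma pi0 : qpi 0 = 0 :> QT.
Proof. by []. Qed.

End Quot.

Section Main.
Variables (R : nzRingType).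

Lemma linZ (U V : lmodType R) (f : U -> V) : linear f -> forall a u, f (a *: u) = a *: f u.
Proof. by move=> lf a u; apply: (scalable_linear lf). Qed.
Lemma lin0 (U V : lmodType R) (f : U -> V) : linear f -> f 0 = 0.
Proof. by move=> lf; rewrite -(scale0r (0 : U)) (linZ lf) scale0r. Qed.

Lemma Q_fg (r : R) : fin_gen (QT r).
Proof.
exists [:: qpi r 1] => q; exists (fun _ => qval q).
rewrite big_ord1 /= piZ mulr1; exact/esym/qvalK.
Qed.

Lemma pi1_tau (S : R -> Prop) (r : R) : S r -> tau S (qpi r 1).
Proof.
move=> Sr; exists r; split=> //; rewrite piZ mulr1 -(pi0 r).
by apply: pi_eq; exists 1; rewrite subr0 mul1r.
Qed.

Lemma fg_coprincipal (S : R -> Prop) : common_mult_closed S -> tau_fin_gen S -> coprincipal S.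
Proof.
move=> [ne _] [M [fgM [eta [[ht hadd hnat] hsurj]]]].
split=> //.
have lid : linear (@id M) by move=> a u v.
have [r0 [Sr0 hr0]] := ht M fgM id lid.
exists r0; split=> // r Sr.
have [f [lf ef]] := hsurj _ (Q_fg r) _ (pi1_tau Sr).
have := hnat M (QT r) fgM (Q_fg r) id f lid lf.
move=> e; change (eta (QT r) f = f (eta M id)) in e; rewrite ef in e.
have : r0 *: qpi r 1 = 0 by rewrite e -(linZ lf) hr0 (lin0 lf).
rewrite piZ mulr1 -(pi0 r) => /pi_eqP [a ha]; exists a; by rewrite -ha subr0.
Qed.

Lemma coprincipal_rep (S : R -> Prop) : coprincipal S -> tau_representable S.
Proof.
move=> [_ [s [Ss hs]]].
have ann : forall (N : lmodType R) (n : N), tau S n -> s *: n = 0.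
  move=> N n [r [Sr hr]]; have [a ->] := hs r Sr; by rewrite -scalerA hr scaler0.
have relZ : forall (N : lmodType R) (n : N), s *: n = 0 -> forall x y, qrel s x y -> x *: n = y *: n.
  move=> N n hn x y [a h]; apply/eqP; rewrite -subr_eq0 -scalerBl h -scalerA hn scaler0 //.
exists (QT s); split; first exact: Q_fg.
exists (fun N f => f (qpi s 1)); split.
- split.
  + move=> N _ f lf; exists s; split=> //.
    rewrite -(linZ lf) piZ mulr1.
    have -> : qpi s s = 0 by rewrite -(pi0 s); apply: pi_eq; exists 1; rewrite subr0 mul1r.
    exact: (lin0 lf).
  + by [].
  + by [].
- move=> N _ n tn.
  have hn := ann N n tn.
  have fE : forall x, qval (qpi s x) *: n = x *: n by move=> x; apply: relZ hn _ _ (rel_qval s x).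
  exists (fun q => qval q *: n); split; last by rewrite fE scale1r.
  move=> a; elim/qind=> x; elim/qind=> y /=.
  have fE2 : forall x, canon s x *: n = x *: n by exact: fE.
  by rewrite fE2 scalerDl fE2 -scalerA !fE2.
- move=> N _ f g lf lg e q.
  rewrite -(qvalK q); have -> : qpi s (qval q) = qval q *: qpi s 1 by rewrite piZ mulr1.
  by rewrite (linZ lf) (linZ lg) e.
Qed.

End Main.

Theorem corollary3p12 (R : nzRingType) (S : R -> Prop) :
  noetherian_ring R -> common_mult_closed S ->
  (tau_representable S <-> tau_fin_gen S) /\ (tau_fin_gen S <-> coprincipal S).
Proof.
move=> _ cmc.
have h1 : tau_representable S -> tau_fin_gen S.
  by move=> [M [fgM [eta [h1 h2 _]]]]; exists M; split=> //; exists eta.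
split; split=> // h.
- exact/coprincipal_rep/fg_coprincipal.
- exact: fg_coprincipal.
- exact/h1/coprincipal_rep.
Qed.
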